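(* Let $(\Phi,\mathtt{Prg},\mathrm{AT})$ be a CLC SPL with $\Phi=(\mathcal F,\phi)$, let $p$ be a valid product, and let $\mathcal D$ be a derivation of $\phi\vdash\mathtt{Prg}\ \textsc{ok}$ in the family-based type system. If a judgment $\theta;\Delta\vdash e:T$ occurs in $\mathcal D$ and $p\models\theta$, then $[\![\Delta]\!]_p\vdash\langle\!\langle e\rangle\!\rangle_p:T$ is derivable in the LC type system relative to the variant program $[\![\mathtt{Prg}]\!]_p$. Moreover, there is such an LC derivation in which every struct name $s$ appearing satisfies $p\models\mathrm{AT}(\mathtt{Prg}(s))$.
   Context: **Lightweight C (LC).** Types: $T ::= \mathtt{int}\mid \mathtt{void}* \mid \mathtt{struct}\ s*$ ($s$ a struct name). Expressions: $e ::= n$ (integer literal) $\mid \mathtt{NULL}\mid x$ (parameter name) $\mid f(e_1,\dots,e_k)$ ($k\ge0$) $\mid e\texttt{->}m \mid e\texttt{->}m=e \mid e\,?\,e:e \mid (e_1,\dots,e_k)$ ($k\ge1$, a parenthesized expression sequence) $\mid \mathsf{uop}\ e\mid e\ \mathsf{bop}\ e\mid \mathtt{MALLOC}(\mathtt{struct}\ s)\mid \mathtt{MFREE}(e)$. A struct definition is $\mathtt{struct}\ s\{T_1\,m_1;\dots;T_k\,m_k;\};$ (distinct member names); a function definition is $T_0\ f(T_1\,x_1,\dots,T_k\,x_k)\{\mathtt{return}\ e;\}$ (distinct parameter names); a program $\mathtt{Prg}=\overline{SD}\ \overline{FD}$ is a sequence of struct definitions followed by a sequence of function definitions, with distinct struct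 names and distinct function names. $\mathtt{Prg}$ is regarded as a finite map: $\mathtt{Prg}(s)$ is the definition of struct $s$, $\mathtt{Prg}(s)(m)=$ ''$T\ m$'' is the declaration of member $m$ in it, $\mathtt{Prg}(f)$ is the definition of function $f$; $\mathrm{dom}(\overline{SD})$ is the set of defined struct names. $\mathtt{Prg}$ is *sane* if (1) every struct name occurring anywhere in $\mathtt{Prg}$ is defined in $\mathtt{Prg}$, (2) every function name occurring in the function definitions is defined in $\mathtt{Prg}$, (3) $\mathtt{Prg}(\mathtt{main})=\mathtt{int\ main}()\{\mathtt{return}\ e;\}$ for some $e$. Operator types: unary $-:(\mathtt{int})\to\mathtt{int}$; unary $!:(T)\to\mathtt{int}$ for every type $T$; binary $+,-,*,/,\&\&,||,<,<=,>,>=:(\mathtt{int},\mathtt{int})\to\mathtt{int}$; binary $==,!=:(T,T)\to\mathtt{int}$ for every type $T$. Subtyping $\le$ is the reflexive closure of $\mathtt{void}*\le\mathtt{struct}\ s*$ for every struct $s$ defined in the program; $\max_\le\{T_1,T_2\}$ is the greater of two $\le$-comparable types. LC typing (relative to the program under consideration; $\Gamma$ a finite map from parameter names to types): (T-int) $\Gamma\vdash n:\mathtt{int}$. (T-null) $\Gamma\vdash\mathtt{NULL}:\mathtt{void}*$. (T-par) if $x{:}T\in\Gamma$ then $\Gamma\vdash x:T$. (T-app) if $\mathtt{Prg}(f)=T_0\,f(T_1x_1,\dots,T_kx_k)\{\dots\}$, and $\Gamma\vdash e_i:T_i'$, $T_i'\le T_i$ for $i=1..k$ (exactly $k$ arguments),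 then $\Gamma\vdash f(e_1,\dots,e_k):T_0$. (T-member) if $\Gamma\vdash e_0:\mathtt{struct}\ s*$ and $\mathtt{Prg}(s)(m)=T\,m$ then $\Gamma\vdash e_0\texttt{->}m:T$. (T-assign) if additionally $\Gamma\vdash e_1:T_1$, $T_1\le T$, then $\Gamma\vdash e_0\texttt{->}m=e_1:T$. (T-cond) if $\Gamma\vdash e_j:T_j$ ($j=0,1,2$) and $T_3=\max_\le\{T_1,T_2\}$ then $\Gamma\vdash e_0?e_1:e_2:T_3$. (T-seq) if $\Gamma\vdash e_i:T_i$ for $i=1..n$ then $\Gamma\vdash(e_1,\dots,e_n):T_n$. (T-uop) if $\Gamma\vdash e_0:T_0$ and $\mathsf{uop}$ has type $(T_0)\to\mathtt{int}$ then $\Gamma\vdash\mathsf{uop}\,e_0:\mathtt{int}$. (T-bop) if $\Gamma\vdash e_1:T_1$, $\Gamma\vdash e_2:T_2$, $T_3=\max_\le\{T_1,T_2\}$ and $\mathsf{bop}$ has type $(T_3,T_3)\to\mathtt{int}$ then $\Gamma\vdash e_1\,\mathsf{bop}\,e_2:\mathtt{int}$. (T-malloc) if $s\in\mathrm{dom}(\overline{SD})$ then $\Gamma\vdash\mathtt{MALLOC}(\mathtt{struct}\ s):\mathtt{struct}\ s*$. (T-mfree) if $\Gamma\vdash e_0:\mathtt{struct}\ s*$ then $\Gamma\vdash\mathtt{MFREE}(e_0):\mathtt{void}*$. **Colored LC (CLC).** A feature model $\Phi=(\mathcal F,\phi)$: $\mathcal F$ a finite set of features, $\phi$ a propositional formula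 over $\mathcal F$ (connectives $!,\&\&,||$, constants $0,1$). A product is $p\subseteq\mathcal F$; $p\models\psi$ means $\psi$ is true under the assignment giving 1 to features in $p$ and 0 to the others; $p$ is valid if $p\models\phi$. For formulas, $\theta\models\theta'$ means $\theta\Rightarrow\theta'$ is valid; $\psi_1\Rightarrow\psi_2$ abbreviates $!\psi_1||\psi_2$ and $\psi_1\Leftrightarrow\psi_2$ the conjunction of both implications. An SPL is a triple $(\Phi,\mathtt{Prg},\mathrm{AT})$ with $\mathtt{Prg}$ an LC program (the code base) and $\mathrm{AT}$ an annotation table assigning a propositional formula over $\mathcal F$ to each occurrence of an annotable fragment of $\mathtt{Prg}$; annotable fragments are: each struct definition, each member declaration $T\,m$, each function definition, each formal parameter declaration $T\,x$, each argument of a function call, and each element of a parenthesized sequence. Occurrences not explicitly annotated have annotation $1$. Abbreviations: $\mathrm{AT}(s)=\mathrm{AT}(\mathtt{Prg}(s))$, $\mathrm{AT}(f)=\mathrm{AT}(\mathtt{Prg}(f))$; $\mathrm{AT}(\mathtt{int})=\mathrm{AT}(\mathtt{void}* )=1$, $\mathrm{AT}(\mathtt{struct}\ s* )=\mathrm{AT}(\mathtt{Prg}(s))$; $\exists(e_1,\dots,e_n)=\mathrm{AT}(e_1)||\cdots||\mathrm{AT}(e_n)$; $\mathtt{neverLast}(k,(e_1,\dots,e_n))=\,!\mathrm{AT}(e_k)||\mathrm{AT}(e_{k+1})||\cdots||\mathrm{AT}(e_n)$. An annotated type environment $\Delta$ maps parameter names to pairs written $x{:}T$ with $\psi$; $[\![\Delta]\!]_p$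 is the (LC) type environment $\{x{:}T \mid x{:}T\text{ with }\psi\text{ is in }\Delta,\ p\models\psi\}$. Family-based typing: (FT-prg) if $\mathtt{Prg}$ is sane, $\mathrm{AT}(\mathtt{main})=1$, $\mathtt{Prg}=\overline{SD}\,\overline{FD}$, $\phi\,\&\&\,\mathrm{AT}(SD)\vdash SD\ \textsc{ok}$ for each $SD$ in $\overline{SD}$ and $\phi\,\&\&\,\mathrm{AT}(FD)\vdash FD\ \textsc{ok}$ for each $FD$ in $\overline{FD}$, then $\phi\vdash\mathtt{Prg}\ \textsc{ok}$. (FT-struct) if $\theta\models\mathrm{AT}(T_i\,m_i)\Rightarrow\mathrm{AT}(T_i)$ for all $i$, then $\theta\vdash\mathtt{struct}\ s\{T_1m_1;\dots;T_km_k;\}\ \textsc{ok}$. (FT-fun) if $\theta\models\mathrm{AT}(T_0)$, $\theta\models\mathrm{AT}(T_i\,x_i)\Rightarrow\mathrm{AT}(T_i)$ for all $i$, $\theta;\ x_1{:}T_1\text{ with }\mathrm{AT}(T_1x_1),\dots,x_k{:}T_k\text{ with }\mathrm{AT}(T_kx_k)\vdash e:T'$ and $T'\le T_0$, then $\theta\vdash T_0\,f(T_1x_1,\dots,T_kx_k)\{\mathtt{return}\ e;\}\ \textsc{ok}$. (FT-int) $\theta;\Delta\vdash n:\mathtt{int}$. (FT-null) $\theta;\Delta\vdash\mathtt{NULL}:\mathtt{void}*$. (FT-par) if $x{:}T$ with $\psi$ is in $\Delta$ and $\theta\models\psi$ then $\theta;\Delta\vdash x:T$. (FT-app) if $\mathtt{Prg}(f)=T_0\,f(T_1x_1,\dots,T_kx_k)\{\dots\}$,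 $\theta\models\mathrm{AT}(\mathtt{Prg}(f))$, and for $i=1..k$ (exactly $k$ arguments) $\theta;\Delta\vdash e_i:T_i'$, $T_i'\le T_i$ and $\theta\models\mathrm{AT}(e_i)\Leftrightarrow\mathrm{AT}(T_ix_i)$, then $\theta;\Delta\vdash f(e_1,\dots,e_k):T_0$. (FT-member) if $\theta;\Delta\vdash e_0:\mathtt{struct}\ s*$, $\mathtt{Prg}(s)(m)=T\,m$ and $\theta\models\mathrm{AT}(T\,m)$ then $\theta;\Delta\vdash e_0\texttt{->}m:T$. (FT-assign) if additionally $\theta;\Delta\vdash e_1:T_1$ and $T_1\le T$ then $\theta;\Delta\vdash e_0\texttt{->}m=e_1:T$. (FT-cond), (FT-uop), (FT-bop), (FT-mfree): as T-cond, T-uop, T-bop, T-mfree with every judgment $\Gamma\vdash$ replaced by $\theta;\Delta\vdash$. (FT-seq) if $\theta\models\exists(e_1,\dots,e_n)$, $\theta\,\&\&\,\mathrm{AT}(e_i);\Delta\vdash e_i:T_i$ for all $i$, $T=T_n$, and $\theta\models\mathtt{neverLast}(i,(e_1,\dots,e_n))$ for every $i$ with $T_i\ne T$, then $\theta;\Delta\vdash(e_1,\dots,e_n):T$. (FT-malloc) if $s\in\mathrm{dom}(\overline{SD})$ and $\theta\models\mathrm{AT}(\mathtt{Prg}(s))$ then $\theta;\Delta\vdash\mathtt{MALLOC}(\mathtt{struct}\ s):\mathtt{struct}\ s*$. **Variant generation.** For a product $p$ and a sequence of annotable occurrences: $[\![\,]\!]_p$ is empty; $[\![a_1\dots a_n]\!]_p=\langle\!\langle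 a_1\rangle\!\rangle_p\,[\![a_2\dots a_n]\!]_p$ if $p\models\mathrm{AT}(a_1)$, and $=[\![a_2\dots a_n]\!]_p$ otherwise. $\langle\!\langle\mathtt{struct}\ s\{\overline{T\,m};\}\rangle\!\rangle_p=\mathtt{struct}\ s\{[\![\overline{T\,m}]\!]_p\}$; $\langle\!\langle T_0f(\overline{T\,x})\{\mathtt{return}\ e;\}\rangle\!\rangle_p=T_0f([\![\overline{T\,x}]\!]_p)\{\mathtt{return}\ \langle\!\langle e\rangle\!\rangle_p;\}$; $\langle\!\langle T\,m\rangle\!\rangle_p=T\,m$, $\langle\!\langle T\,x\rangle\!\rangle_p=T\,x$; $\langle\!\langle f(\bar e)\rangle\!\rangle_p=f([\![\bar e]\!]_p)$; $\langle\!\langle(\tilde e)\rangle\!\rangle_p=([\![\tilde e]\!]_p)$; on all other expression forms $\langle\!\langle\cdot\rangle\!\rangle_p$ acts homomorphically on immediate subexpressions ($n$, $\mathtt{NULL}$, $x$, $\mathtt{MALLOC}(\mathtt{struct}\ s)$ unchanged). The variant is $[\![\mathtt{Prg}]\!]_p=[\![\overline{SD}]\!]_p\,[\![\overline{FD}]\!]_p$ for $\mathtt{Prg}=\overline{SD}\,\overline{FD}$. *)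

(* Defs.v *)
From Stdlib Require Import String ZArith.
From Stdlib Require List.
From mathcomp Require Import all_boot.

Set Implicit Arguments.
Unset Strict Implicit.
Unset Printing Implicit Defensive.

Inductive typ : Type := Tint | Tvoid | Tstruct (s : string).

Inductive uop : Type := UNeg | UNot.
Inductive bop : Type :=
  BAdd | BSub | BMul | BDiv | BAnd | BOr | BLt | BLe | BGt | BGe | BEq | BNe.

Inductive exp : Type :=
| ENum (n : Z)
| ENull
| EVar (x : string)
| EApp (f : string) (args : list exp)
| EMember (e : exp) (m : string)
| EAssign (e : exp) (m : string) (e1 : exp)
| ECond (e0 e1 e2 : exp)
| ESeq (es : list exp)
| EUop (u : uop) (e : exp)
| EBop (b : bop) (e1 e2 : exp)
| EMalloc (s : string)
| EMfree (e : exp).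

Record sdef := SDef { sd_name : string; sd_members : list (typ * string) }.
Record fdef := FDef { fd_ret : typ; fd_name : string;
                      fd_params : list (typ * string); fd_body : exp }.
Record lprog := LProg { lp_structs : list sdef; lp_funs : list fdef }.

Fixpoint find_struct (l : list sdef) (s : string) : option sdef :=
  match l with
  | [::] => None
  | sd :: l' => if String.eqb (sd_name sd) s then Some sd else find_struct l' s
  end.

Fixpoint find_member (l : list (typ * string)) (m : string) : option typ :=
  match l with
  | [::] => None
  | (T, m') :: l' => if String.eqb m' m then Some T else find_member l' m
  end.

Fixpoint find_fun (l : list fdef) (f : string) : option fdef :=
  match l with
  | [::] => None
  | fd :: l' => if String.eqb (fd_name fd) f then Some fd else find_fun l' f
  end.

Definition struct_defined (P : lprog) (s : string) : Prop :=
  exists sd, find_struct (lp_structs P) s = Some sd.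

(* Subtyping: reflexive closure of void* <= struct s* for every struct s
   defined in the program (given by the predicate [def]). *)
Definition subty (def : string -> Prop) (T1 T2 : typ) : Prop :=
  T1 = T2 \/ (T1 = Tvoid /\ exists s, T2 = Tstruct s /\ def s).

Definition tmax (def : string -> Prop) (T1 T2 T3 : typ) : Prop :=
  (subty def T1 T2 /\ T3 = T2) \/ (subty def T2 T1 /\ T3 = T1).

Definition uop_ty (u : uop) (T0 : typ) : Prop :=
  match u with UNeg => T0 = Tint | UNot => True end.
Definition bop_ty (b : bop) (T3 : typ) : Prop :=
  match b with BEq | BNe => True | _ => T3 = Tint end.

Definition okT (ok : string -> Prop) (T : typ) : Prop :=
  match T with Tstruct s => ok s | _ => True end.

(* The extra parameter
   [ok] restricts the struct names that may appear in the derivation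
   (in every judged type and every formal-parameter type used);
   with [ok := fun _ => True] this is exactly the LC type system. *)
Inductive lc_ty (P : lprog) (G : list (string * typ)) (ok : string -> Prop)
  : exp -> typ -> Prop :=
| T_int n : lc_ty P G ok (ENum n) Tint
| T_null : lc_ty P G ok ENull Tvoid
| T_par x T : List.In (x, T) G -> okT ok T -> lc_ty P G ok (EVar x) T
| T_app f es fd Ts :
    find_fun (lp_funs P) f = Some fd ->
    List.Forall2 (lc_ty P G ok) es Ts ->
    List.Forall2 (subty (struct_defined P)) Ts (map fst (fd_params fd)) ->
    List.Forall (okT ok) (map fst (fd_params fd)) ->
    okT ok (fd_ret fd) ->
    lc_ty P G ok (EApp f es) (fd_ret fd)
| T_member e0 s m T sd :
    lc_ty P G ok e0 (Tstruct s) ->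
    find_struct (lp_structs P) s = Some sd ->
    find_member (sd_members sd) m = Some T ->
    okT ok T ->
    lc_ty P G ok (EMember e0 m) T
| T_assign e0 s m e1 T T1 sd :
    lc_ty P G ok e0 (Tstruct s) ->
    find_struct (lp_structs P) s = Some sd ->
    find_member (sd_members sd) m = Some T ->
    lc_ty P G ok e1 T1 ->
    subty (struct_defined P) T1 T ->
    okT ok T ->
    lc_ty P G ok (EAssign e0 m e1) T
| T_cond e0 e1 e2 T0 T1 T2 T3 :
    lc_ty P G ok e0 T0 -> lc_ty P G ok e1 T1 -> lc_ty P G ok e2 T2 ->
    tmax (struct_defined P) T1 T2 T3 -> okT ok T3 ->
    lc_ty P G ok (ECond e0 e1 e2) T3
| T_seq es Ts T :
    List.Forall2 (lc_ty P G ok) es (rcons Ts T) ->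
    okT ok T ->
    lc_ty P G ok (ESeq es) T
| T_uop u e0 T0 :
    lc_ty P G ok e0 T0 -> uop_ty u T0 -> lc_ty P G ok (EUop u e0) Tint
| T_bop b e1 e2 T1 T2 T3 :
    lc_ty P G ok e1 T1 -> lc_ty P G ok e2 T2 ->
    tmax (struct_defined P) T1 T2 T3 -> bop_ty b T3 ->
    lc_ty P G ok (EBop b e1 e2) Tint
| T_malloc s :
    struct_defined P s -> ok s -> lc_ty P G ok (EMalloc s) (Tstruct s)
| T_mfree e0 s :
    lc_ty P G ok e0 (Tstruct s) -> lc_ty P G ok (EMfree e0) Tvoid.

Section CLC.
Variable F : finType.

Inductive formula : Type :=
| FVar (f : F) | FTrue | FFalse
| FNot (a : formula) | FAnd (a b : formula) | FOr (a b : formula).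

Fixpoint eval (p : {set F}) (a : formula) : bool :=
  match a with
  | FVar f => f \in p
  | FTrue => true
  | FFalse => false
  | FNot a => ~~ eval p a
  | FAnd a b => eval p a && eval p b
  | FOr a b => eval p a || eval p b
  end.

Definition entails (a b : formula) : Prop :=
  forall p : {set F}, eval p a -> eval p b.

Definition fimp (a b : formula) := FOr (FNot a) b.
Definition fiff (a b : formula) := FAnd (fimp a b) (fimp b a).
Definition fors (l : list formula) : formula := foldr FOr FFalse l.

(* Annotations are stored in the syntax tree: each annotable occurrence
   carries its formula (unannotated occurrences carry FTrue). *)
Inductive cexp : Type :=
| CNum (n : Z)
| CNull
| CVar (x : string)
| CApp (f : string) (args : list (formula * cexp))
| CMember (e : cexp) (m : string)
| CAssign (e : cexp) (m : string) (e1 : cexp)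
| CCond (e0 e1 e2 : cexp)
| CSeq (es : list (formula * cexp))
| CUop (u : uop) (e : cexp)
| CBop (b : bop) (e1 e2 : cexp)
| CMalloc (s : string)
| CMfree (e : cexp).

Record csdef := CSDef { csd_ann : formula; csd_name : string;
                        csd_members : list (formula * (typ * string)) }.
Record cfdef := CFDef { cfd_ann : formula; cfd_ret : typ; cfd_name : string;
                        cfd_params : list (formula * (typ * string));
                        cfd_body : cexp }.
Record cprog := CProg { cp_structs : list csdef; cp_funs : list cfdef }.

Fixpoint cfind_struct (l : list csdef) (s : string) : option csdef :=
  match l with
  | [::] => None
  | sd :: l' => if String.eqb (csd_name sd) s then Some sd else cfind_struct l' s
  end.

Fixpoint cfind_member (l : list (formula * (typ * string))) (m : string)
  : option (formula * typ) :=
  match l with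
  | [::] => None
  | (a, (T, m')) :: l' => if String.eqb m' m then Some (a, T) else cfind_member l' m
  end.

Fixpoint cfind_fun (l : list cfdef) (f : string) : option cfdef :=
  match l with
  | [::] => None
  | fd :: l' => if String.eqb (cfd_name fd) f then Some fd else cfind_fun l' f
  end.

Definition cprog_wf (Prg : cprog) : Prop :=
  List.NoDup (map csd_name (cp_structs Prg)) /\
  List.NoDup (map cfd_name (cp_funs Prg)) /\
  (forall sd, List.In sd (cp_structs Prg) ->
     List.NoDup (map (fun d => d.2.2) (csd_members sd))) /\
  (forall fd, List.In fd (cp_funs Prg) ->
     List.NoDup (map (fun d => d.2.2) (cfd_params fd))).

Definition typ_structs (T : typ) : list string :=
  match T with Tstruct s => [:: s] | _ => [::] end.

Fixpoint cexp_structs (e : cexp) : list string :=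
  match e with
  | CNum _ | CNull | CVar _ => [::]
  | CApp _ args =>
      (fix go (l : list (formula * cexp)) : list string :=
         match l with [::] => [::] | (_, e') :: l' => cexp_structs e' ++ go l' end) args
  | CMember e0 _ => cexp_structs e0
  | CAssign e0 _ e1 => cexp_structs e0 ++ cexp_structs e1
  | CCond e0 e1 e2 => cexp_structs e0 ++ cexp_structs e1 ++ cexp_structs e2
  | CSeq es =>
      (fix go (l : list (formula * cexp)) : list string :=
         match l with [::] => [::] | (_, e') :: l' => cexp_structs e' ++ go l' end) es
  | CUop _ e0 => cexp_structs e0
  | CBop _ e1 e2 => cexp_structs e1 ++ cexp_structs e2
  | CMalloc s => [:: s]
  | CMfree e0 => cexp_structs e0
  end.

Fixpoint cexp_funs (e : cexp) : list string :=
  match e with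
  | CNum _ | CNull | CVar _ | CMalloc _ => [::]
  | CApp f args =>
      f :: (fix go (l : list (formula * cexp)) : list string :=
         match l with [::] => [::] | (_, e') :: l' => cexp_funs e' ++ go l' end) args
  | CMember e0 _ => cexp_funs e0
  | CAssign e0 _ e1 => cexp_funs e0 ++ cexp_funs e1
  | CCond e0 e1 e2 => cexp_funs e0 ++ cexp_funs e1 ++ cexp_funs e2
  | CSeq es =>
      (fix go (l : list (formula * cexp)) : list string :=
         match l with [::] => [::] | (_, e') :: l' => cexp_funs e' ++ go l' end) es
  | CUop _ e0 => cexp_funs e0
  | CBop _ e1 e2 => cexp_funs e1 ++ cexp_funs e2
  | CMfree e0 => cexp_funs e0
  end.

Definition prog_struct_occs (Prg : cprog) : list string :=
  flatten (map (fun sd => csd_name sd ::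
                 flatten (map (fun d => typ_structs d.2.1) (csd_members sd)))
               (cp_structs Prg)) ++
  flatten (map (fun fd => typ_structs (cfd_ret fd) ++
                 flatten (map (fun d => typ_structs d.2.1) (cfd_params fd)) ++
                 cexp_structs (cfd_body fd))
               (cp_funs Prg)).

Definition prog_fun_occs (Prg : cprog) : list string :=
  flatten (map (fun fd => cexp_funs (cfd_body fd)) (cp_funs Prg)).

Definition sane (Prg : cprog) : Prop :=
  (forall s, List.In s (prog_struct_occs Prg) ->
     exists sd, cfind_struct (cp_structs Prg) s = Some sd) /\
  (forall f, List.In f (prog_fun_occs Prg) ->
     exists fd, cfind_fun (cp_funs Prg) f = Some fd) /\
  (exists fd, cfind_fun (cp_funs Prg) "main"%string = Some fd /\
              cfd_ret fd = Tint /\ cfd_params fd = [::]).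

Definition cdef (Prg : cprog) (s : string) : Prop :=
  exists sd, cfind_struct (cp_structs Prg) s = Some sd.

Definition at_typ (Prg : cprog) (T : typ) : formula :=
  match T with
  | Tstruct s => match cfind_struct (cp_structs Prg) s with
                 | Some sd => csd_ann sd | None => FFalse end
  | _ => FTrue
  end.

Definition cenv := list (string * typ * formula).

(* neverLast(i, (e_1..e_n)), with 0-based index i *)
Definition never_last (i : nat) (es : list (formula * cexp)) : formula :=
  let anns := map fst es in
  FOr (FNot (nth FTrue anns i)) (fors (drop i.+1 anns)).

(* Family-based typing derivations (proof-relevant, so that one can speak
   of the judgments occurring in a derivation). *)
Section FT.
Variable Prg : cprog.
Variable Delta : cenv.

Inductive ft : formula -> cexp -> typ -> Type :=
| FT_int th n : ft th (CNum n) Tint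
| FT_null th : ft th CNull Tvoid
| FT_par th x T psi :
    List.In (x, T, psi) Delta -> entails th psi -> ft th (CVar x) T
| FT_app th f args fd :
    cfind_fun (cp_funs Prg) f = Some fd ->
    entails th (cfd_ann fd) ->
    ft_args th args (cfd_params fd) ->
    ft th (CApp f args) (cfd_ret fd)
| FT_member th e0 s m T sd a :
    ft th e0 (Tstruct s) ->
    cfind_struct (cp_structs Prg) s = Some sd ->
    cfind_member (csd_members sd) m = Some (a, T) ->
    entails th a ->
    ft th (CMember e0 m) T
| FT_assign th e0 s m e1 T T1 sd a :
    ft th e0 (Tstruct s) ->
    cfind_struct (cp_structs Prg) s = Some sd ->
    cfind_member (csd_members sd) m = Some (a, T) ->
    entails th a ->
    ft th e1 T1 ->
    subty (cdef Prg) T1 T ->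
    ft th (CAssign e0 m e1) T
| FT_cond th e0 e1 e2 T0 T1 T2 T3 :
    ft th e0 T0 -> ft th e1 T1 -> ft th e2 T2 ->
    tmax (cdef Prg) T1 T2 T3 ->
    ft th (CCond e0 e1 e2) T3
| FT_seq th es Ts T :
    entails th (fors (map fst es)) ->
    ft_seq th es (rcons Ts T) ->
    (forall i, (i < size es)%N -> nth Tint (rcons Ts T) i <> T ->
               entails th (never_last i es)) ->
    ft th (CSeq es) T
| FT_uop th u e0 T0 :
    ft th e0 T0 -> uop_ty u T0 -> ft th (CUop u e0) Tint
| FT_bop th b e1 e2 T1 T2 T3 :
    ft th e1 T1 -> ft th e2 T2 ->
    tmax (cdef Prg) T1 T2 T3 -> bop_ty b T3 ->
    ft th (CBop b e1 e2) Tint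
| FT_malloc th s sd :
    cfind_struct (cp_structs Prg) s = Some sd ->
    entails th (csd_ann sd) ->
    ft th (CMalloc s) (Tstruct s)
| FT_mfree th e0 s :
    ft th e0 (Tstruct s) -> ft th (CMfree e0) Tvoid
with ft_args : formula -> list (formula * cexp) ->
               list (formula * (typ * string)) -> Type :=
| FA_nil th : ft_args th [::] [::]
| FA_cons th a e args pa T x ps T' :
    ft th e T' -> subty (cdef Prg) T' T -> entails th (fiff a pa) ->
    ft_args th args ps ->
    ft_args th ((a, e) :: args) ((pa, (T, x)) :: ps)
with ft_seq : formula -> list (formula * cexp) -> list typ -> Type :=
| FS_nil th : ft_seq th [::] [::]
| FS_cons th a e es T Ts :
    ft (FAnd th a) e T -> ft_seq th es Ts ->
    ft_seq th ((a, e) :: es) (T :: Ts).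

Fixpoint occ th e T (d : ft th e T) (J : formula * cexp * typ) {struct d} : Prop :=
  J = (th, e, T) \/
  match d with
  | FT_int _ _ => False
  | FT_null _ => False
  | FT_par _ _ _ _ _ _ => False
  | FT_app _ _ _ _ _ _ da => occ_args da J
  | FT_member _ _ _ _ _ _ _ d0 _ _ _ => occ d0 J
  | FT_assign _ _ _ _ _ _ _ _ _ d0 _ _ _ d1 _ => occ d0 J \/ occ d1 J
  | FT_cond _ _ _ _ _ _ _ _ d0 d1 d2 _ => occ d0 J \/ occ d1 J \/ occ d2 J
  | FT_seq _ _ _ _ _ ds _ => occ_seq ds J
  | FT_uop _ _ _ _ d0 _ => occ d0 J
  | FT_bop _ _ _ _ _ _ _ d1 d2 _ _ => occ d1 J \/ occ d2 J
  | FT_malloc _ _ _ _ _ => False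
  | FT_mfree _ _ _ d0 => occ d0 J
  end
with occ_args th args ps (d : ft_args th args ps) (J : formula * cexp * typ)
  {struct d} : Prop :=
  match d with
  | FA_nil _ => False
  | FA_cons _ _ _ _ _ _ _ _ _ d1 _ _ dr => occ d1 J \/ occ_args dr J
  end
with occ_seq th es Ts (d : ft_seq th es Ts) (J : formula * cexp * typ)
  {struct d} : Prop :=
  match d with
  | FS_nil _ => False
  | FS_cons _ _ _ _ _ _ d1 dr => occ d1 J \/ occ_seq dr J
  end.

End FT.

Definition delta_of (fd : cfdef) : cenv :=
  map (fun d => (d.2.2, d.2.1, d.1)) (cfd_params fd).

Inductive ft_fun (Prg : cprog) (th : formula) (fd : cfdef) : Type :=
| FTFun :
    entails th (at_typ Prg (cfd_ret fd)) ->
    (forall a T x, List.In (a, (T, x)) (cfd_params fd) ->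
       entails th (fimp a (at_typ Prg T))) ->
    forall T', ft Prg (delta_of fd) th (cfd_body fd) T' ->
    subty (cdef Prg) T' (cfd_ret fd) ->
    ft_fun Prg th fd.

Definition struct_ok (Prg : cprog) (th : formula) (sd : csdef) : Prop :=
  forall a T m, List.In (a, (T, m)) (csd_members sd) ->
    entails th (fimp a (at_typ Prg T)).

Record ft_prg (Prg : cprog) (phi : formula) : Type := FTPrg {
  fp_sane : sane Prg;
  fp_main : forall fd, cfind_fun (cp_funs Prg) "main"%string = Some fd ->
                       cfd_ann fd = FTrue;
  fp_structs : forall sd, List.In sd (cp_structs Prg) ->
                 struct_ok Prg (FAnd phi (csd_ann sd)) sd;
  fp_funs : forall fd, List.In fd (cp_funs Prg) ->
                 ft_fun Prg (FAnd phi (cfd_ann fd)) fd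
}.

Definition occ_fun (Prg : cprog) th fd (d : ft_fun Prg th fd)
  (th' : formula) (Dl : cenv) (e : cexp) (T : typ) : Prop :=
  match d with
  | FTFun _ _ _ db _ => Dl = delta_of fd /\ occ db (th', e, T)
  end.

Definition occurs_in_prg (Prg : cprog) (phi : formula) (D : ft_prg Prg phi)
  (th : formula) (Dl : cenv) (e : cexp) (T : typ) : Prop :=
  exists fd (H : List.In fd (cp_funs Prg)), occ_fun (@fp_funs Prg phi D fd H) th Dl e T.

Fixpoint vexp (p : {set F}) (e : cexp) : exp :=
  match e with
  | CNum n => ENum n
  | CNull => ENull
  | CVar x => EVar x
  | CApp f args =>
      EApp f ((fix go (l : list (formula * cexp)) : list exp :=
                 match l with
                 | [::] => [::]
                 | (a, e') :: l' => if eval p a then vexp p e' :: go l' else go l'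
                 end) args)
  | CMember e0 m => EMember (vexp p e0) m
  | CAssign e0 m e1 => EAssign (vexp p e0) m (vexp p e1)
  | CCond e0 e1 e2 => ECond (vexp p e0) (vexp p e1) (vexp p e2)
  | CSeq es =>
      ESeq ((fix go (l : list (formula * cexp)) : list exp :=
               match l with
               | [::] => [::]
               | (a, e') :: l' => if eval p a then vexp p e' :: go l' else go l'
               end) es)
  | CUop u e0 => EUop u (vexp p e0)
  | CBop b e1 e2 => EBop b (vexp p e1) (vexp p e2)
  | CMalloc s => EMalloc s
  | CMfree e0 => EMfree (vexp p e0)
  end.

Definition vstruct (p : {set F}) (sd : csdef) : sdef :=
  SDef (csd_name sd) (map snd (filter (fun d => eval p d.1) (csd_members sd))).

Definition vfun (p : {set F}) (fd : cfdef) : fdef :=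
  FDef (cfd_ret fd) (cfd_name fd)
       (map snd (filter (fun d => eval p d.1) (cfd_params fd)))
       (vexp p (cfd_body fd)).

Definition vprog (p : {set F}) (Prg : cprog) : lprog :=
  LProg (map (vstruct p) (filter (fun sd => eval p (csd_ann sd)) (cp_structs Prg)))
        (map (vfun p) (filter (fun fd => eval p (cfd_ann fd)) (cp_funs Prg))).

Definition venv (p : {set F}) (Dl : cenv) : list (string * typ) :=
  map (fun d => (d.1.1, d.1.2)) (filter (fun d => eval p d.2) Dl).

Definition present (p : {set F}) (Prg : cprog) (s : string) : Prop :=
  exists sd, cfind_struct (cp_structs Prg) s = Some sd /\ eval p (csd_ann sd).

End CLC.

(* Main.v *)
Require Import Defs.
From Stdlib Require Import String ZArith.
From Stdlib Require List.
From mathcomp Require Import all_boot.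
Set Implicit Arguments.
Unset Strict Implicit.

Scheme ft_mut := Induction for ft Sort Prop
 with ft_args_mut := Induction for ft_args Sort Prop
 with ft_seq_mut := Induction for ft_seq Sort Prop.

Definition typ_eq_dec (a b : typ) : {a = b} + {a <> b}.
Proof. decide equality; apply string_dec. Defined.

Lemma Forall2_map_l (A A' B : Type) (f : A -> A') (R : A' -> B -> Prop) l Ts :
  List.Forall2 (fun a t => R (f a) t) l Ts -> List.Forall2 R (map f l) Ts.
Proof. by elim=> //= a t l0 Ts0 H _ IH; constructor. Qed.

Lemma Forall2_impl' (A B : Type) (R S : A -> B -> Prop) l Ts :
  (forall a t, R a t -> S a t) -> List.Forall2 R l Ts -> List.Forall2 S l Ts.
Proof. move=> H; elim=> //= a t l0 Ts0 Hr _ IH; constructor; auto. Qed.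

Lemma Forall2_rcons_last (A B : Type) (R : A -> B -> Prop) l Ts T :
  List.Forall2 R l (rcons Ts T) -> exists x, R x T.
Proof.
  elim: Ts l => [|t Ts IH] l /= H; inversion H; subst; eauto.
Qed.

Lemma In_filter (A : Type) (b : pred A) x l : List.In x (filter b l) -> List.In x l /\ b x.
Proof.
  elim: l => //= a l IH. case E: (b a) => /=.
  - move=> [<-|H]; [by auto | by case: (IH H); auto].
  - by move=> H; case: (IH H); auto.
Qed.

Lemma In_filter' (A : Type) (b : pred A) x l : List.In x l -> b x -> List.In x (filter b l).
Proof.
  elim: l => //= a l IH [<-|H] Hb; first by rewrite Hb; left.
  case: (b a); [right|]; auto.
Qed.

Lemma In_map' (A B : Type) (f : A -> B) y l : List.In y (map f l) -> exists x, List.In x l /\ y = f x.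
Proof. elim: l => //= a l IH [<-|H]; [by eauto | by case: (IH H) => x [? ?]; eauto]. Qed.

Lemma In_map (A B : Type) (f : A -> B) x l : List.In x l -> List.In (f x) (map f l).
Proof. elim: l => //= a l IH [<-|H]; [by left | right; auto]. Qed.

Section Aux.
Variable F : finType.
Variable p : {set F}.

Lemma eval_fors l : eval p (fors l) = has (eval p) l.
Proof. by elim: l => //= a l ->. Qed.

Lemma vexp_app f (args : seq (formula F * cexp F)) :
  vexp p (CApp f args) = EApp f (map (fun d => vexp p d.2) (filter (fun d => eval p d.1) args)).
Proof.
  elim: args => [|[a e'] args IH] //=. move: IH => /= [IH].
  by case: (eval p a) => /=; rewrite IH.
Qed.

Lemma vexp_seq (es : seq (formula F * cexp F)) :
  vexp p (CSeq es) = ESeq (map (fun d => vexp p d.2) (filter (fun d => eval p d.1) es)).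
Proof.
  elim: es => [|[a e'] es IH] //=. move: IH => /= [IH].
  by case: (eval p a) => /=; rewrite IH.
Qed.

Lemma fors_false_filter (l : seq (formula F * cexp F)) :
  eval p (fors (map fst l)) = false -> filter (fun ae => eval p ae.1) l = [::].
Proof. elim: l => //= x l IH; case: (eval p x.1) => //= /IH ->. Qed.

Lemma seq_aux (P : formula F * cexp F -> typ -> Prop) l Ts T :
  List.Forall2 (fun ae t => eval p ae.1 -> P ae t) l Ts ->
  eval p (fors (map fst l)) ->
  (forall i, i < size l -> nth Tint Ts i <> T -> eval p (never_last i l)) ->
  exists Ts', List.Forall2 P (filter (fun ae => eval p ae.1) l) (rcons Ts' T).
Proof.
  elim: l Ts => [|x l IH] Ts HF Hf Hn; first by [].
  inversion HF as [|a t l0 Ts0 Hx HF0]; subst.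
  case E: (eval p (fors (map fst l))).
  - have [Ts' HT] := IH Ts0 HF0 E (fun i Hi Hne => Hn i.+1 Hi Hne).
    rewrite /=. case Ex: (eval p x.1).
    + by exists (t :: Ts'); constructor; auto.
    + by exists Ts'.
  - move: Hf => /=; rewrite E orbF => Ex.
    have Ht : t = T.
    { case: (typ_eq_dec t T) => // Hne.
      have := Hn 0 is_true_true Hne. by rewrite /never_last /= Ex drop0 E. }
    subst t. exists [::]. rewrite /= Ex fors_false_filter //.
    by constructor; auto.
Qed.

Variable Prg : cprog F.

Lemma find_fun_v (l : seq (cfdef F)) f fd :
  cfind_fun l f = Some fd -> eval p (cfd_ann fd) ->
  find_fun (map (vfun p) (filter (fun fd => eval p (cfd_ann fd)) l)) f = Some (vfun p fd).
Proof.
  elim: l => //= a l IH. case E: (String.eqb (cfd_name a) f).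
  - by move=> [<-] ->; rewrite /= E.
  - move=> H Hf; case: (eval p (cfd_ann a)) => /=; last by apply: IH.
    by rewrite E; apply: IH.
Qed.

Lemma find_struct_v (l : seq (csdef F)) s sd :
  cfind_struct l s = Some sd -> eval p (csd_ann sd) ->
  find_struct (map (vstruct p) (filter (fun sd => eval p (csd_ann sd)) l)) s = Some (vstruct p sd).
Proof.
  elim: l => //= a l IH. case E: (String.eqb (csd_name a) s).
  - by move=> [<-] ->; rewrite /= E.
  - move=> H Hf; case: (eval p (csd_ann a)) => /=; last by apply: IH.
    by rewrite E; apply: IH.
Qed.

Lemma find_member_v (l : seq (formula F * (typ * string))) m a T :
  cfind_member l m = Some (a, T) -> eval p a ->
  find_member (map snd (filter (fun d => eval p d.1) l)) m = Some T.
Proof.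
  elim: l => //= [[a' [T' m']]] l IH /=. case E: (String.eqb m' m).
  - by move=> [-> ->] ->; rewrite /= E.
  - move=> H Hf; case: (eval p a') => /=; last by apply: IH.
    by rewrite E; apply: IH.
Qed.

Lemma cfind_fun_in (l : seq (cfdef F)) f fd : cfind_fun l f = Some fd -> List.In fd l.
Proof. elim: l => //= a l IH; case: (String.eqb _ _) => [[->]|/IH]; auto. Qed.

Lemma cfind_struct_in (l : seq (csdef F)) s sd : cfind_struct l s = Some sd -> List.In sd l.
Proof. elim: l => //= a l IH; case: (String.eqb _ _) => [[->]|/IH]; auto. Qed.

Lemma cfind_member_in (l : seq (formula F * (typ * string))) m a T : cfind_member l m = Some (a, T) -> List.In (a, (T, m)) l.
Proof.
  elim: l => //= [[a' [T' m']]] l IH. case E: (String.eqb m' m).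
  - move=> [-> ->]; left. by move/String.eqb_eq: E => ->.
  - by move/IH; auto.
Qed.

Lemma at_typ_present T : eval p (at_typ Prg T) -> okT (present p Prg) T.
Proof.
  case: T => //= s. case E: (cfind_struct _ s) => [sd|] //= H. by exists sd.
Qed.

Lemma present_def s : present p Prg s -> struct_defined (vprog p Prg) s.
Proof. move=> [sd [H1 H2]]; exists (vstruct p sd); exact: find_struct_v. Qed.

Lemma subty_v T1 T2 : subty (cdef Prg) T1 T2 -> okT (present p Prg) T2 ->
  subty (struct_defined (vprog p Prg)) T1 T2.
Proof.
  move=> [->|[-> [s [-> _]]]] H; [by left| right; split=> //; exists s; split=> //].
  exact: present_def.
Qed.

Lemma tmax_v T1 T2 T3 : tmax (cdef Prg) T1 T2 T3 -> okT (present p Prg) T1 ->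
  okT (present p Prg) T2 ->
  tmax (struct_defined (vprog p Prg)) T1 T2 T3 /\ okT (present p Prg) T3.
Proof.
  move=> [[H ->]|[H ->]] H1 H2; split=> //; [left|right]; split=> //; exact: subty_v.
Qed.

End Aux.

Section Main.
Variables (F : finType) (Prg : cprog F) (phi : formula F) (D : ft_prg Prg phi) (p : {set F}).
Hypothesis Hphi : eval p phi.
Variable ok : string -> Prop.
Hypothesis Hok : forall s, present p Prg s -> ok s.
Variable Dl : cenv F.

Definition envok := forall x T psi, List.In (x, T, psi) Dl -> eval p psi -> okT (present p Prg) T.

Definition good (e : cexp F) T :=
  lc_ty (vprog p Prg) (venv p Dl) ok (vexp p e) T /\ okT (present p Prg) T.

Lemma okT_ok T : okT (present p Prg) T -> okT ok T.
Proof. by case: T => //= s /Hok. Qed.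

Lemma fun_ret f fd : cfind_fun (cp_funs Prg) f = Some fd -> eval p (cfd_ann fd) ->
  okT (present p Prg) (cfd_ret fd) /\
  (forall a T x, List.In (a, (T, x)) (cfd_params fd) -> eval p a -> okT (present p Prg) T).
Proof.
  move=> Hf Ha. have Hin := cfind_fun_in Hf.
  case: (fp_funs D Hin) => Hret Hpar _ _ _.
  have Hr : eval p (FAnd phi (cfd_ann fd)) by rewrite /= Hphi Ha.
  split; first by apply: at_typ_present; apply: Hret.
  move=> a T x Hi Hea. apply: at_typ_present.
  by have := Hpar _ _ _ Hi p Hr; rewrite /= Hea.
Qed.

Lemma struct_member s sd m a T : cfind_struct (cp_structs Prg) s = Some sd ->
  cfind_member (csd_members sd) m = Some (a, T) -> eval p (csd_ann sd) -> eval p a ->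
  okT (present p Prg) T.
Proof.
  move=> Hs Hm Hsd Ha. have Hin := cfind_struct_in Hs.
  have Hok' := fp_structs D Hin.
  have Hr : eval p (FAnd phi (csd_ann sd)) by rewrite /= Hphi Hsd.
  apply: at_typ_present. by have := Hok' _ _ _ (cfind_member_in Hm) p Hr; rewrite /= Ha.
Qed.

Lemma occ_self th e T (d : ft Prg Dl th e T) : occ d (th, e, T).
Proof. destruct d; by left. Qed.

Definition Pft th e T (d : ft Prg Dl th e T) : Prop :=
  forall J, occ d J -> eval p J.1.1 -> eval p th /\ (envok -> good J.1.2 J.2).

Definition Pargs th args ps (d : ft_args Prg Dl th args ps) : Prop :=
  (forall J, occ_args d J -> eval p J.1.1 -> eval p th /\ (envok -> good J.1.2 J.2)) /\
  (eval p th -> envok ->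
   (forall pa T x, List.In (pa, (T, x)) ps -> eval p pa -> okT (present p Prg) T) ->
   exists Ts, List.Forall2 (lc_ty (vprog p Prg) (venv p Dl) ok)
                (map (fun d => vexp p d.2) (filter (fun d => eval p d.1) args)) Ts /\
              List.Forall2 (subty (struct_defined (vprog p Prg))) Ts
                (map fst (map snd (filter (fun d => eval p d.1) ps)))).

Definition Pseq th es Ts (d : ft_seq Prg Dl th es Ts) : Prop :=
  (forall J, occ_seq d J -> eval p J.1.1 -> eval p th /\ (envok -> good J.1.2 J.2)) /\
  (eval p th -> envok -> List.Forall2 (fun ae t => eval p ae.1 -> good ae.2 t) es Ts).

Lemma child th e T (d : ft Prg Dl th e T) : Pft d -> eval p th -> envok -> good e T.
Proof. move=> H Hth Henv. by case: (H _ (occ_self d) Hth) => _ /(_ Henv). Qed.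

Lemma main th e T (d : ft Prg Dl th e T) : Pft d.
Proof.
  apply: (@ft_mut F Prg Dl Pft Pargs Pseq).
  - move=> th0 n J /= [->|[]] H; split=> // _; split=> //; constructor.
  - move=> th0 J /= [->|[]] H; split=> // _; split=> //; constructor.
  - move=> th0 x T0 psi Hi He J /= [->|[]] H; split=> // Henv.
    have Hp := He p H. have HT := Henv _ _ _ Hi Hp.
    split=> //. constructor; last exact: okT_ok.
    exact: (@In_map _ _ (fun d : string * typ * formula F => (d.1.1, d.1.2)) _ _
              (@In_filter' _ (fun d : string * typ * formula F => eval p d.2) _ _ Hi Hp)).
  - move=> th0 f args fd Hf He da [IHa1 IHa2] J /= [->|Ho] H; last exact: IHa1.
    split=> // Henv. have Ha := He p H.
    have [Hret Hpar] := fun_ret Hf Ha.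
    have [Ts [H1 H2]] := IHa2 H Henv Hpar.
    split=> //. rewrite vexp_app.
    apply: (T_app (fd := vfun p fd) (Ts := Ts)) _ H1 H2 _ _.
    + exact: find_fun_v.
    + apply List.Forall_forall => T0 Hin.
      have [[T1 x] [Hin2 ->]] := In_map' Hin.
      have [d0 [Hin3 Heq]] := In_map' Hin2.
      have [Hd0 Hev] := In_filter Hin3.
      subst. apply: okT_ok. clear Hin3. case: d0 Hd0 Hev Heq => a0 [T2 x2] /= Hd0 Hev [-> _]. exact: Hpar Hd0 Hev.
    + exact: okT_ok.
  - move=> th0 e0 s m T0 sd a d0 IH0 Hs Hm He J /= [->|Ho] H; last exact: IH0.
    split=> // Henv. have [Hl0 Hp0] := child IH0 H Henv.
    case: Hp0 => sd' [Hs' Hann]. rewrite Hs in Hs'; case: Hs' => ?; subst sd'.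
    have Ha := He p H. have HT := struct_member Hs Hm Hann Ha.
    split=> //=. apply: (T_member (sd := vstruct p sd)) Hl0 _ _ _.
    + exact: find_struct_v.
    + exact: find_member_v Hm Ha.
    + exact: okT_ok.
  - move=> th0 e0 s m e1 T0 T1 sd a d0 IH0 Hs Hm He d1 IH1 Hsub J /= [->|[Ho|Ho]] H;
      [|exact: IH0|exact: IH1].
    split=> // Henv. have [Hl0 Hp0] := child IH0 H Henv. have [Hl1 Hp1] := child IH1 H Henv.
    case: Hp0 => sd' [Hs' Hann]. rewrite Hs in Hs'; case: Hs' => ?; subst sd'.
    have Ha := He p H. have HT := struct_member Hs Hm Hann Ha.
    split=> //=. apply: (T_assign (sd := vstruct p sd)) Hl0 _ _ Hl1 _ _.
    + exact: find_struct_v.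
    + exact: find_member_v Hm Ha.
    + exact: subty_v.
    + exact: okT_ok.
  - move=> th0 e0 e1 e2 T0 T1 T2 T3 d0 IH0 d1 IH1 d2 IH2 Ht J /= [->|[Ho|[Ho|Ho]]] H;
      [|exact: IH0|exact: IH1|exact: IH2].
    split=> // Henv. have [Hl0 Hp0] := child IH0 H Henv. have [Hl1 Hp1] := child IH1 H Henv.
    have [Hl2 Hp2] := child IH2 H Henv.
    have [Ht' Hp3] := tmax_v Ht Hp1 Hp2.
    split=> //=. apply: T_cond Hl0 Hl1 Hl2 Ht' _. exact: okT_ok.
  - move=> th0 es Ts T0 He ds [IHs1 IHs2] Hn J /= [->|Ho] H; last exact: IHs1.
    split=> // Henv. have HF := IHs2 H Henv.
    have [Ts' HF'] := @seq_aux F p (fun ae t => good ae.2 t) es (rcons Ts T0) T0 HF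
                        (He p H) (fun i Hi Hne => Hn i Hi Hne p H).
    have [x [_ HT]] := Forall2_rcons_last HF'.
    split=> //. rewrite vexp_seq. apply: (T_seq (Ts := Ts')); last exact: okT_ok.
    apply: Forall2_map_l. apply: Forall2_impl' HF'. by move=> ? ? [].
  - move=> th0 u e0 T0 d0 IH0 Hu J /= [->|Ho] H; last exact: IH0.
    split=> // Henv. have [Hl0 _] := child IH0 H Henv.
    split=> //=. exact: T_uop Hl0 Hu.
  - move=> th0 b e1 e2 T1 T2 T3 d1 IH1 d2 IH2 Ht Hb J /= [->|[Ho|Ho]] H;
      [|exact: IH1|exact: IH2].
    split=> // Henv. have [Hl1 Hp1] := child IH1 H Henv. have [Hl2 Hp2] := child IH2 H Henv.
    have [Ht' _] := tmax_v Ht Hp1 Hp2.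
    split=> //=. exact: T_bop Hl1 Hl2 Ht' Hb.
  - move=> th0 s sd Hs He J /= [->|[]] H; split=> // Henv.
    have Hpr : present p Prg s by exists sd; split=> //; apply: He.
    split=> //=. constructor; [exact: present_def | exact: Hok].
  - move=> th0 e0 s d0 IH0 J /= [->|Ho] H; last exact: IH0.
    split=> // Henv. have [Hl0 _] := child IH0 H Henv.
    split=> //=. exact: T_mfree Hl0.
  - move=> th0; split=> // _ _ _. by exists [::].
  - move=> th0 a e0 args pa T0 x ps T' d0 IH0 Hsub Hiff da [IHa1 IHa2]; split.
    + move=> J /= [Ho|Ho] H; [exact: IH0|exact: IHa1].
    + move=> H Henv Hpar.
      have Heq : eval p a = eval p pa.
      { have := Hiff p H. rewrite /=. by case: (eval p a); case: (eval p pa). }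
      have [Ts [H1 H2]] := IHa2 H Henv (fun pa' T'' x' Hi => Hpar pa' T'' x' (or_intror Hi)).
      rewrite /= -Heq. case Ea: (eval p a) => /=; last by exists Ts.
      have [Hl0 Hp0] := child IH0 H Henv.
      have HT : okT (present p Prg) T0 by apply: (Hpar pa T0 x); [left|rewrite -Heq].
      exists (T' :: Ts); split; constructor=> //. exact: subty_v.
  - move=> th0; split=> //.
  - move=> th0 a e0 es T0 Ts d0 IH0 ds [IHs1 IHs2]; split.
    + move=> J /= [Ho|Ho] H; last exact: IHs1.
      have [Hth G] := IH0 J Ho H. split=> //. by move: Hth => /= /andP [].
    + move=> H Henv. constructor; last exact: IHs2.
      move=> /= Ha. apply: child IH0 _ Henv. by rewrite /= H Ha.
Qed.

End Main.

Theorem theorem3 (F : finType) (phi : formula F) (Prg : cprog F)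
  (p : {set F}) (D : ft_prg Prg phi)
  (th : formula F) (Dl : cenv F) (e : cexp F) (T : typ) :
  cprog_wf Prg ->
  eval p phi ->
  occurs_in_prg D th Dl e T ->
  eval p th ->
  lc_ty (vprog p Prg) (venv p Dl) (fun _ => True) (vexp p e) T /\
  (lc_ty (vprog p Prg) (venv p Dl) (present p Prg) (vexp p e) T /\
   (forall x T', List.In (x, T') (venv p Dl) -> okT (present p Prg) T')).
Proof.
  move=> _ Hphi [fd [Hin Hocc]] Hth.
  move: Hocc; rewrite /occ_fun. case: (fp_funs D Hin) => Hret Hpar T' db Hsub [HDl Ho].
  subst Dl.
  have [Hr G1] := @main F Prg phi D p Hphi (present p Prg) (fun s h => h) (delta_of fd) _ _ _ db _ Ho Hth.
  have Henv : envok Prg p (delta_of fd).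
  { move=> x T0 psi Hi Hpsi.
    have [[a [T1 x1]] [Hi' Heq]] := In_map' Hi. case: Heq => ? ? ?; subst.
    apply: at_typ_present. by have := Hpar _ _ _ Hi' p Hr; rewrite /= Hpsi. }
  have [_ G2] := @main F Prg phi D p Hphi (fun _ => True) (fun _ _ => I) (delta_of fd) _ _ _ db _ Ho Hth.
  have [L1 _] := G1 Henv. have [L2 _] := G2 Henv.
  split=> //; split=> //.
  move=> x T0 Hi. have [d0 [Hi2 Heq]] := In_map' Hi. have [Hd0 Hev] := In_filter Hi2.
  case: d0 Hd0 Hev Heq Hi2 => [[x1 T1] a] /= Hd0 Hev [_ ->] _.
  exact: Henv Hd0 Hev.
Qed.
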